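(* In the 1SDI setting where Alice measures $A_0=\sigma_x$, $A_1=\sigma_y$, Bob measures $B_0=(\sigma_x-\sigma_y)/\sqrt2$, $B_1=(\sigma_x+\sigma_y)/\sqrt2$, and Charlie is a black box, the Svetlichny family $P^V_{SvF}$ ($0<V\le1$) demonstrates tripartite steering if and only if $V>\frac1{\sqrt2}$.
   Context: Outcomes and settings: $a,b,c,x,y,z\in\{0,1\}$. For a qubit observable $O$ with eigenvalues $\pm1$, the measurement has projectors $M_0=(\mathbb 1+O)/2$, $M_1=(\mathbb 1-O)/2$; $M^A_{a|x}$, $M^B_{b|y}$ denote the projectors of $A_x$, $B_y$. Svetlichny family: $P^V_{SvF}(abc|xyz)=\frac{2+(-1)^{a\oplus b\oplus c\oplus xy\oplus yz\oplus xz}\sqrt2\,V}{16}$. 1SDI fully LHS-LHV model: $P(abc|xyz)=\sum_\lambda q_\lambda \mathrm{Tr}(M^A_{a|x}\rho^\lambda_A)\mathrm{Tr}(M^B_{b|y}\rho^\lambda_B)P_\lambda(c|z)$ with probabilities $q_\lambda$, qubit states $\rho^\lambda_A,\rho^\lambda_B$ and arbitrary conditional distributions $P_\lambda(c|z)$. Tripartite steering in the 1SDI scenario: a correlation $P$ demonstrates tripartite steering iff (i) it admits no 1SDI fully LHS-LHV model, and (ii) it certifies entanglement between Charlie and Alice–Bob, i.e. there is no finite $d$, state $\rho^{ABC}=\sum_\lambda r_\lambda\rho^\lambda_{AB}\otimes\rho^\lambda_C$ on $\mathbb C^2\otimes\mathbb C^2\otimes\mathbb C^d$ (separable across the cut $AB|C$)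 and POVMs $\{N_{c|z}\}_c$ on $\mathbb C^d$ with $P(abc|xyz)=\mathrm{Tr}[(M^A_{a|x}\otimes M^B_{b|y}\otimes N_{c|z})\rho^{ABC}]$. *)

(* Defs.v *)
(* Complex numbers are modelled by an arbitrary
   numClosedFieldType C (algebraically closed field with conjugation and
   order on its real subfield). *)
From HB Require Import structures.
From mathcomp Require Import all_boot all_order all_algebra.
Set Implicit Arguments. Unset Strict Implicit. Unset Printing Implicit Defensive.
Import Order.TTheory GRing.Theory Num.Theory.
Local Open Scope ring_scope.

Lemma kron_divP m n (i : 'I_(m * n)) : (i %/ n < m)%N.
Proof.
case: n i => [|n] i; first by case: i => i; rewrite muln0.
by rewrite ltn_divLR // ltn_ord.
Qed.

Lemma kron_modP m n (i : 'I_(m * n)) : (i %% n < n)%N.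
Proof.
case: n i => [|n] i; first by case: i => i; rewrite muln0.
by rewrite ltn_mod.
Qed.

(* index (i1, i2) of C^m1 (x) C^m2 is i1 * m2 + i2 *)
Definition kron {R : pzRingType} m1 n1 m2 n2 (A : 'M[R]_(m1, n1))
  (B : 'M[R]_(m2, n2)) : 'M[R]_(m1 * m2, n1 * n2) :=
  \matrix_(i, j) (A (Ordinal (kron_divP i)) (Ordinal (kron_divP j)) *
                  B (Ordinal (kron_modP i)) (Ordinal (kron_modP j))).

Definition adjmx {C : numClosedFieldType} m n (A : 'M[C]_(m, n)) : 'M[C]_(n, m) :=
  (map_mx Num.conj A)^T.

Definition psd {C : numClosedFieldType} n (A : 'M[C]_n) : Prop :=
  A = adjmx A /\ forall v : 'cV[C]_n, 0 <= (adjmx v *m A *m v) 0 0.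

Definition is_state {C : numClosedFieldType} n (rho : 'M[C]_n) : Prop :=
  psd rho /\ \tr rho = 1.

Definition sgn {C : numClosedFieldType} (b : bool) : C := if b then -1 else 1.

Definition sigma_x {C : numClosedFieldType} : 'M[C]_2 :=
  \matrix_(i, j) (if i == j then 0 else 1).
Definition sigma_y {C : numClosedFieldType} : 'M[C]_2 :=
  \matrix_(i, j) (if i == j then 0 else if i == ord0 then - 'i else 'i).

(* projector of outcome a (false = 0, true = 1) of observable O :
   M_a = (1 + (-1)^a O)/2 *)
Definition proj_of {C : numClosedFieldType} (O : 'M[C]_2) (a : bool) : 'M[C]_2 :=
  2^-1 *: (1%:M + sgn a *: O).

Definition obsA {C : numClosedFieldType} (x : bool) : 'M[C]_2 :=
  if x then sigma_y else sigma_x.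
Definition obsB {C : numClosedFieldType} (y : bool) : 'M[C]_2 :=
  (sqrtC 2)^-1 *: (if y then sigma_x + sigma_y else sigma_x - sigma_y).

Definition MA {C : numClosedFieldType} (a x : bool) : 'M[C]_2 := proj_of (obsA x) a.
Definition MB {C : numClosedFieldType} (b y : bool) : 'M[C]_2 := proj_of (obsB y) b.

(* a tripartite correlation P(abc|xyz), argument order a b c x y z *)
Definition corr (C : numClosedFieldType) := bool -> bool -> bool -> bool -> bool -> bool -> C.

Definition PSvF {C : numClosedFieldType} (V : C) : corr C :=
  fun a b c x y z =>
    (2 + sgn (a (+) b (+) c (+) (x && y) (+) (y && z) (+) (x && z)) * sqrtC 2 * V)
    / 16.

(* 1SDI fully LHS-LHV model (finitely many hidden variables lambda : 'I_n) *)
Definition LHS_LHV {C : numClosedFieldType} (P : corr C) : Prop :=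
  exists (n : nat) (q : 'I_n -> C) (rhoA rhoB : 'I_n -> 'M[C]_2)
         (Pc : 'I_n -> bool -> bool -> C),
    (forall l, 0 <= q l) /\ \sum_(l < n) q l = 1 /\
    (forall l, is_state (rhoA l) /\ is_state (rhoB l)) /\
    (forall l c z, 0 <= Pc l c z) /\
    (forall l z, Pc l false z + Pc l true z = 1) /\
    (forall a b c x y z,
        P a b c x y z =
        \sum_(l < n) q l * \tr (MA a x *m rhoA l) * \tr (MB b y *m rhoB l)
                     * Pc l c z).

Definition AB_C_separable_model {C : numClosedFieldType} (P : corr C) : Prop :=
  exists (d n : nat) (r : 'I_n -> C) (rhoAB : 'I_n -> 'M[C]_(2 * 2))
         (rhoC : 'I_n -> 'M[C]_d) (N : bool -> bool -> 'M[C]_d),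
    (forall l, 0 <= r l) /\ \sum_(l < n) r l = 1 /\
    (forall l, is_state (rhoAB l) /\ is_state (rhoC l)) /\
    (forall c z, psd (N c z)) /\
    (forall z, N false z + N true z = 1%:M) /\
    (forall a b c x y z,
        P a b c x y z =
        \tr (kron (kron (MA a x) (MB b y)) (N c z) *m
             \sum_(l < n) (r l *: kron (rhoAB l) (rhoC l)))).

Definition tripartite_steering {C : numClosedFieldType} (P : corr C) : Prop :=
  ~ LHS_LHV P /\ ~ AB_C_separable_model P.

(* Main.v *)
Require Import Defs.
From HB Require Import structures.
From mathcomp Require Import all_boot all_order all_algebra ring.
Set Implicit Arguments. Unset Strict Implicit. Unset Printing Implicit Defensive.
Import Order.TTheory GRing.Theory Num.Theory.
Local Open Scope ring_scope.

Section Kron.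
Variable R : comPzRingType.

Lemma idx_lt m n (i : 'I_m) (j : 'I_n) : (i * n + j < m * n)%N.
Proof.
have hi := ltn_ord i; have hj := ltn_ord j.
apply: (@leq_trans (i * n + n)); first by rewrite ltn_add2l.
by rewrite -mulSnr leq_mul2r hi orbT.
Qed.

Definition idx m n (i : 'I_m) (j : 'I_n) : 'I_(m * n) := Ordinal (idx_lt i j).

Lemma idx_div m n (i : 'I_m) (j : 'I_n) : Ordinal (kron_divP (idx i j)) = i.
Proof.
apply: val_inj => /=; have hj := ltn_ord j.
by rewrite divnMDl ?(leq_ltn_trans _ hj) // divn_small // addn0.
Qed.

Lemma idx_mod m n (i : 'I_m) (j : 'I_n) : Ordinal (kron_modP (idx i j)) = j.
Proof.
apply: val_inj => /=; have hj := ltn_ord j.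
by rewrite modnMDl modn_small.
Qed.

Lemma idx_surj m n (p : 'I_(m * n)) :
  p = idx (Ordinal (kron_divP p)) (Ordinal (kron_modP p)).
Proof. by apply: val_inj => /=; rewrite -divn_eq. Qed.

Lemma idx_inj m n (i i' : 'I_m) (j j' : 'I_n) :
  (idx i j == idx i' j') = (i == i') && (j == j').
Proof.
apply/idP/andP => [/eqP h|[/eqP -> /eqP ->] //].
have h1 := congr1 (fun p => Ordinal (kron_divP p)) h.
have h2 := congr1 (fun p => Ordinal (kron_modP p)) h.
rewrite /= !idx_div !idx_mod in h1 h2; by rewrite h1 h2 !eqxx.
Qed.

Lemma sum_idx m n (F : 'I_(m * n) -> R) :
  \sum_k F k = \sum_(i < m) \sum_(j < n) F (idx i j).
Proof.
rewrite pair_big /=.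
rewrite (reindex (fun p : 'I_m * 'I_n => idx p.1 p.2)) //=.
exists (fun k => (Ordinal (kron_divP k), Ordinal (kron_modP k))) => [[i j] _|k _] /=.
  by rewrite idx_div idx_mod.
by rewrite -idx_surj.
Qed.

Lemma kronE m1 n1 m2 n2 (A : 'M[R]_(m1, n1)) (B : 'M[R]_(m2, n2)) i j k l :
  kron A B (idx i k) (idx j l) = A i j * B k l.
Proof. by rewrite /kron mxE !idx_div !idx_mod. Qed.

Lemma kron_mul m1 n1 p1 m2 n2 p2 (A : 'M[R]_(m1, n1)) (B : 'M[R]_(m2, n2))
  (A' : 'M[R]_(n1, p1)) (B' : 'M[R]_(n2, p2)) :
  kron A B *m kron A' B' = kron (A *m A') (B *m B').
Proof.
apply/matrixP => p q; rewrite (idx_surj p) (idx_surj q).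
set i := Ordinal _; set k := Ordinal _; set j := Ordinal _; set l := Ordinal _.
rewrite kronE !mxE sum_idx big_distrlr /=; apply: eq_bigr => a _.
apply: eq_bigr => b _; rewrite !kronE; ring.
Qed.

Lemma tr_kron m n (A : 'M[R]_m) (B : 'M[R]_n) : \tr (kron A B) = \tr A * \tr B.
Proof.
rewrite /mxtrace sum_idx big_distrlr /=; apply: eq_bigr => i _.
by apply: eq_bigr => j _; rewrite kronE.
Qed.

Lemma kron11 m n : kron (1%:M : 'M[R]_m) (1%:M : 'M[R]_n) = 1%:M.
Proof.
apply/matrixP => p q; rewrite (idx_surj p) (idx_surj q) kronE !mxE idx_inj.
by case: eqP; case: eqP => _ _ /=; rewrite ?mulr1 ?mulr0 ?mul0r.
Qed.

Lemma kronDl m1 n1 m2 n2 (A A' : 'M[R]_(m1, n1)) (B : 'M[R]_(m2, n2)) :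
  kron (A + A') B = kron A B + kron A' B.
Proof. by apply/matrixP => p q; rewrite !mxE mulrDl. Qed.
Lemma kronDr m1 n1 m2 n2 (A : 'M[R]_(m1, n1)) (B B' : 'M[R]_(m2, n2)) :
  kron A (B + B') = kron A B + kron A B'.
Proof. by apply/matrixP => p q; rewrite !mxE mulrDr. Qed.
Lemma kronZl m1 n1 m2 n2 c (A : 'M[R]_(m1, n1)) (B : 'M[R]_(m2, n2)) :
  kron (c *: A) B = c *: kron A B.
Proof. by apply/matrixP => p q; rewrite !mxE mulrA. Qed.
Lemma kronZr m1 n1 m2 n2 c (A : 'M[R]_(m1, n1)) (B : 'M[R]_(m2, n2)) :
  kron A (c *: B) = c *: kron A B.
Proof. by apply/matrixP => p q; rewrite !mxE mulrCA. Qed.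
Lemma kron_suml m1 n1 m2 n2 I (r : seq I) (P : pred I) (F : I -> 'M[R]_(m1, n1))
  (B : 'M[R]_(m2, n2)) :
  kron (\sum_(i <- r | P i) F i) B = \sum_(i <- r | P i) kron (F i) B.
Proof.
apply/matrixP => p q; rewrite !mxE !summxE mulr_suml.
by apply: eq_bigr => i _; rewrite !mxE.
Qed.
Lemma kron_sumr m1 n1 m2 n2 I (r : seq I) (P : pred I) (A : 'M[R]_(m1, n1))
  (F : I -> 'M[R]_(m2, n2)) :
  kron A (\sum_(i <- r | P i) F i) = \sum_(i <- r | P i) kron A (F i).
Proof.
apply/matrixP => p q; rewrite !mxE !summxE mulr_sumr.
by apply: eq_bigr => i _; rewrite !mxE.
Qed.
End Kron.

Section Adj.
Variable C : numClosedFieldType.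

Lemma adjmxE m n (A : 'M[C]_(m, n)) i j : adjmx A i j = (A j i)^*.
Proof. by rewrite !mxE. Qed.

Lemma adjmx_mul m n p (A : 'M[C]_(m, n)) (B : 'M[C]_(n, p)) :
  adjmx (A *m B) = adjmx B *m adjmx A.
Proof. by rewrite /adjmx map_mxM trmx_mul. Qed.

Lemma adjmxK m n (A : 'M[C]_(m, n)) : adjmx (adjmx A) = A.
Proof. by apply/matrixP => i j; rewrite !adjmxE conjCK. Qed.

Lemma adjmxD m n (A B : 'M[C]_(m, n)) : adjmx (A + B) = adjmx A + adjmx B.
Proof. by apply/matrixP => i j; rewrite !mxE rmorphD. Qed.

Lemma adjmxZ m n c (A : 'M[C]_(m, n)) : adjmx (c *: A) = c^* *: adjmx A.
Proof. by apply/matrixP => i j; rewrite !mxE rmorphM. Qed.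

Lemma adjmx_sum m n I (r : seq I) (P : pred I) (F : I -> 'M[C]_(m, n)) :
  adjmx (\sum_(i <- r | P i) F i) = \sum_(i <- r | P i) adjmx (F i).
Proof.
apply/matrixP => i j; rewrite !mxE !summxE rmorph_sum.
by apply: eq_bigr => k _; rewrite !mxE.
Qed.

Lemma adjmx_delta m n (i : 'I_m) (j : 'I_n) : adjmx (delta_mx i j : 'M[C]_(m,n)) = delta_mx j i.
Proof. by apply/matrixP => a b; rewrite !mxE rmorph_nat andbC. Qed.

Lemma adjmx1 n : adjmx (1%:M : 'M[C]_n) = 1%:M.
Proof. by apply/matrixP => a b; rewrite !mxE rmorph_nat eq_sym. Qed.

Lemma adjmx_kron m1 n1 m2 n2 (A : 'M[C]_(m1, n1)) (B : 'M[C]_(m2, n2)) :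
  adjmx (kron A B) = kron (adjmx A) (adjmx B).
Proof.
apply/matrixP => p q; rewrite (idx_surj p) (idx_surj q) kronE adjmxE kronE.
by rewrite rmorphM !adjmxE.
Qed.

Lemma adjmx_tstar n (A : 'M[C]_n) : adjmx A = (A ^t*)%sesqui.
Proof. by apply/matrixP => i j; rewrite !mxE. Qed.

Definition qf n (A : 'M[C]_n) (v : 'cV[C]_n) := (adjmx v *m A *m v) 0 0.

Lemma mx11E (X Y : 'M[C]_1) : (X *m Y) 0 0 = X 0 0 * Y 0 0.
Proof. by rewrite mxE big_ord1. Qed.

Lemma psd_rank1 n (w : 'cV[C]_n) : psd (w *m adjmx w).
Proof.
split; first by rewrite adjmx_mul adjmxK.
move=> v; rewrite mulmxA -(mulmxA (adjmx v *m w)) mx11E.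
have -> : (adjmx w *m v) 0 0 = ((adjmx v *m w) 0 0)^*.
  by rewrite -[adjmx w *m v]adjmxK adjmx_mul adjmxK adjmxE.
exact: mul_conjC_ge0.
Qed.

Lemma psd0 n : psd (0 : 'M[C]_n).
Proof.
split; first by apply/matrixP => i j; rewrite !mxE rmorph0.
by move=> v; rewrite mulmx0 mul0mx mxE.
Qed.

Lemma qfD n (A B : 'M[C]_n) v : qf (A + B) v = qf A v + qf B v.
Proof. by rewrite /qf mulmxDr mulmxDl mxE. Qed.

Lemma qfZ n c (A : 'M[C]_n) v : qf (c *: A) v = c * qf A v.
Proof. by rewrite /qf -scalemxAr -scalemxAl mxE. Qed.

Lemma psd_add n (A B : 'M[C]_n) : psd A -> psd B -> psd (A + B).
Proof.
move=> [hA qA] [hB qB]; split; first by rewrite adjmxD -hA -hB.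
by move=> v; have := qfD A B v; rewrite /qf => ->; apply: addr_ge0.
Qed.

Lemma psd_scale n c (A : 'M[C]_n) : 0 <= c -> psd A -> psd (c *: A).
Proof.
move=> hc [hA qA]; split; first by rewrite adjmxZ geC0_conj // -hA.
by move=> v; have := qfZ c A v; rewrite /qf => ->; apply: mulr_ge0.
Qed.

Lemma psd_sum n I (r : seq I) (P : pred I) (F : I -> 'M[C]_n) :
  (forall i, P i -> psd (F i)) -> psd (\sum_(i <- r | P i) F i).
Proof.
move=> h; apply: (big_ind (fun A => psd A)) => //; [exact: psd0 | exact: psd_add].
Qed.

Lemma psd_decomp n (A : 'M[C]_n) : psd A ->
  exists (d : 'I_n -> C) (u : 'I_n -> 'cV[C]_n),
    (forall k, 0 <= d k) /\ A = \sum_k d k *: (u k *m adjmx (u k)).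
Proof.
move=> [hA qA].
have hn : A \is normalmx by apply/eqP; rewrite -adjmx_tstar -hA.
move/orthomx_spectralP: hn.
set P := spectralmx A; set D := spectral_diag A.
have Pu : P \is unitarymx := spectral_unitarymx A.
rewrite invmx_unitary // -adjmx_tstar => hdec.
have PP : P *m adjmx P = 1%:M by rewrite adjmx_tstar; apply/unitarymxP.
pose u k := adjmx P *m delta_mx k (0 : 'I_1).
have adju k : adjmx (u k) = delta_mx 0 k *m P by rewrite adjmx_mul adjmx_delta adjmxK.
exists (fun k => D 0 k), u; split.
  move=> k; have := qA (u k); rewrite adju hdec /u.
  have -> : delta_mx (0:'I_1) k *m P *m (adjmx P *m diag_mx D *m P) *m (adjmx P *m delta_mx k (0:'I_1))
     = delta_mx 0 k *m diag_mx D *m delta_mx k 0.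
    by rewrite !mulmxA -(mulmxA (delta_mx 0 k)) PP mulmx1 -(mulmxA _ P) PP mulmx1.
  rewrite diag_mx_sum_delta mulmx_sumr mulmx_suml summxE (bigD1 k) //= big1 ?addr0.
    by rewrite -scalemxAr -scalemxAl !mul_delta_mx !mxE !eqxx mulr1.
  move=> i /negbTE hik; rewrite -scalemxAr -scalemxAl mul_delta_mx_cond eq_sym hik mulr0n.
  by rewrite mul0mx scaler0 mxE.
rewrite hdec diag_mx_sum_delta mulmx_sumr mulmx_suml; apply: eq_bigr => k _.
rewrite adju -scalemxAr -scalemxAl; congr (_ *: _).
by rewrite /u !mulmxA -(mulmxA _ (delta_mx k 0)) mul_delta_mx.
Qed.

Lemma tr_sum n I (r : seq I) (P : pred I) (F : I -> 'M[C]_n) :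
  \tr (\sum_(i <- r | P i) F i) = \sum_(i <- r | P i) \tr (F i).
Proof.
apply: (big_morph _ (@mxtraceD _ _)).
by rewrite /mxtrace big1 // => i _; rewrite mxE.
Qed.

Lemma tr_rank1 n (M : 'M[C]_n) (w : 'cV[C]_n) : \tr (M *m (w *m adjmx w)) = qf M w.
Proof. by rewrite mulmxA mxtrace_mulC mulmxA /mxtrace big_ord1. Qed.

Lemma tr_psd_ge0 n (M S : 'M[C]_n) : psd M -> psd S -> 0 <= \tr (M *m S).
Proof.
move=> hM /psd_decomp [d [u [hd ->]]].
rewrite mulmx_sumr tr_sum; apply: sumr_ge0 => k _.
by rewrite -scalemxAr mxtraceZ tr_rank1; apply: mulr_ge0 => //; case: hM => _; apply.
Qed.

Lemma psd_kron m n (A : 'M[C]_m) (B : 'M[C]_n) : psd A -> psd B -> psd (kron A B).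
Proof.
move=> /psd_decomp [d [u [hd ->]]] /psd_decomp [e [w [he ->]]].
rewrite kron_suml; apply: psd_sum => i _; rewrite kron_sumr; apply: psd_sum => j _.
rewrite kronZl kronZr scalerA; apply: psd_scale; first exact: mulr_ge0.
rewrite -kron_mul -adjmx_kron; exact: psd_rank1.
Qed.

End Adj.

Notation i0 := (@ord0 1).
Notation i1 := (lift (@ord0 1) (@ord0 0)).

Section Core.
Variable C : numClosedFieldType.
Local Notation s := (sqrtC (2 : C)).

Lemma s2 : s ^+ 2 = 2. Proof. exact: sqrtCK. Qed.
Lemma s_gt0 : 0 < s. Proof. by rewrite sqrtC_gt0 ltr0n. Qed.
Lemma s_neq0 : s != 0. Proof. by rewrite gt_eqF // s_gt0. Qed.
Lemma sV : s^-1 * s = 1. Proof. by rewrite mulVf // s_neq0. Qed.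
Lemma sconj : s^* = s. Proof. by rewrite geC0_conj // ltW // s_gt0. Qed.
Lemma ii : 'i ^+ 2 = - 1 :> C. Proof. exact: sqrCi. Qed.
Lemma half2 : 2^-1 * 2 = 1 :> C. Proof. by rewrite mulVf // pnatr_eq0. Qed.

Lemma tr_kron_gen m n (A : 'M[C]_m) (B : 'M[C]_n) (R : 'M[C]_(m * n)) :
  \tr (kron A B *m R) =
  \sum_i \sum_j \sum_k \sum_l A i j * B k l * R (idx j l) (idx i k).
Proof.
rewrite /mxtrace sum_idx; apply: eq_bigr => i _.
rewrite [RHS]exchange_big; apply: eq_bigr => k _ /=.
rewrite mxE sum_idx; apply: eq_bigr => j _; apply: eq_bigr => l _.
by rewrite kronE.
Qed.

Lemma qf_delta2 n (A : 'M[C]_n) p q : (adjmx (delta_mx p (0:'I_1)) *m A *m delta_mx q (0:'I_1)) 0 0 = A p q.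
Proof.
rewrite adjmx_delta mxE (bigD1 q) //= big1 ?addr0.
  rewrite mxE (bigD1 p) //= big1 ?addr0; first by rewrite !mxE !eqxx mul1r mulr1.
  by move=> i /negbTE h; rewrite !mxE h andbF mul0r.
by move=> i /negbTE h; rewrite [X in _ * X]mxE h mulr0.
Qed.

Lemma qf_delta2m n (A : 'M[C]_n) p q : (adjmx (delta_mx p (0:'I_1)) *m A *m delta_mx q (0:'I_1)) = (A p q)%:M.
Proof. by apply/matrixP => i j; rewrite !ord1 qf_delta2 mxE eqxx mulr1n. Qed.

Lemma qf_pair n (A : 'M[C]_n) p q c :
  qf A (delta_mx p (0:'I_1) + c *: delta_mx q (0:'I_1)) =
  A p p + c * A p q + c^* * A q p + c * c^* * A q q.
Proof.
rewrite /qf adjmxD adjmxZ !mulmxDl !mulmxDr -!scalemxAl -!scalemxAr !qf_delta2m !mxE /=.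
rewrite !mulr1n; ring.
Qed.

Lemma diag_ge0 n (A : 'M[C]_n) p : psd A -> 0 <= A p p.
Proof. by move=> [_ h]; have := h (delta_mx p (0:'I_1)); rewrite /qf qf_delta2. Qed.

Definition fxyz (x y z : bool) := (x && y) (+) (y && z) (+) (x && z).

Definition Yz (R : 'M[C]_(2 * 2)) (z : bool) :=
  \sum_x \sum_y \sum_a \sum_b
    sgn (a (+) b (+) fxyz x y z) * \tr (kron (MA a x) (MB b y) *m R).

Lemma tr_MAMB (R : 'M[C]_(2 * 2)) a b x y :
  \tr (kron (MA a x) (MB b y) *m R) =
  2^-1 * 2^-1 * (\tr (kron 1%:M 1%:M *m R) + sgn b * \tr (kron 1%:M (obsB y) *m R)
     + sgn a * \tr (kron (obsA x) 1%:M *m R)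
     + sgn a * sgn b * \tr (kron (obsA x) (obsB y) *m R)).
Proof.
rewrite /MA /MB /proj_of kronZl kronZr !kronDl !kronDr !kronZl !kronZr.
rewrite !scalerA -!scalemxAl !mxtraceZ !mulmxDl !mxtraceD -!scalemxAl !mxtraceZ; ring.
Qed.

Lemma sum_ab (e : bool) (T0 TA TB TAB : C) :
 \sum_a \sum_b sgn (a (+) b (+) e) * (2^-1 * 2^-1 * (T0 + sgn b * TB + sgn a * TA + sgn a * sgn b * TAB)) = sgn e * TAB.
Proof.
have h2 : (2 : C) != 0 by rewrite pnatr_eq0.
by case: e; rewrite !big_bool /sgn /=; field.
Qed.

Lemma Yz_obs R z : Yz R z =
  \sum_x \sum_y sgn (fxyz x y z) * \tr (kron (obsA x) (obsB y) *m R).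
Proof.
rewrite /Yz; apply: eq_bigr => x _; apply: eq_bigr => y _.
rewrite -(sum_ab (fxyz x y z) (\tr (kron 1%:M 1%:M *m R)) (\tr (kron (obsA x) 1%:M *m R))
   (\tr (kron 1%:M (obsB y) *m R))).
by apply: eq_bigr => a _; apply: eq_bigr => b _; rewrite tr_MAMB.
Qed.

End Core.

Section Core2.
Variable C : numClosedFieldType.
Local Notation s := (sqrtC (2 : C)).

Lemma tr_obs (R : 'M[C]_(2 * 2)) x y :
  \tr (kron (obsA x) (obsB y) *m R) =
    (if x then -'i else 1) * (s^-1 * (if y then 1 - 'i else 1 + 'i)) * R (idx i1 i1) (idx i0 i0)
  + (if x then -'i else 1) * (s^-1 * (if y then 1 + 'i else 1 - 'i)) * R (idx i1 i0) (idx i0 i1)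
  + (if x then 'i else 1) * (s^-1 * (if y then 1 - 'i else 1 + 'i)) * R (idx i0 i1) (idx i1 i0)
  + (if x then 'i else 1) * (s^-1 * (if y then 1 + 'i else 1 - 'i)) * R (idx i0 i0) (idx i1 i1).
Proof.
case: x; case: y; rewrite tr_kron_gen !big_ord_recl !big_ord0 /obsA /obsB /sigma_x /sigma_y !mxE /=; ring.
Qed.

Lemma trace4 (R : 'M[C]_(2 * 2)) : \tr R =
  R (idx i0 i0) (idx i0 i0) + R (idx i0 i1) (idx i0 i1) +
  R (idx i1 i0) (idx i1 i0) + R (idx i1 i1) (idx i1 i1).
Proof. by rewrite /mxtrace sum_idx !big_ord_recl !big_ord0 /=; ring. Qed.

Definition Tform (j q a b c d : C) (x y : bool) :=
    (if x then -j else 1) * (q^-1 * (if y then 1 - j else 1 + j)) * a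
  + (if x then -j else 1) * (q^-1 * (if y then 1 + j else 1 - j)) * b
  + (if x then j else 1) * (q^-1 * (if y then 1 - j else 1 + j)) * c
  + (if x then j else 1) * (q^-1 * (if y then 1 + j else 1 - j)) * d.

Lemma alg_core (j q a b c d r00 r01 r10 r11 : C) (e0 e1 : bool) :
  j ^+ 2 = -1 -> q ^+ 2 = 2 -> q != 0 ->
  4 - (sgn e0 * (\sum_x \sum_y sgn (fxyz x y false) * Tform j q a b c d x y)
     + sgn e1 * (\sum_x \sum_y sgn (fxyz x y true) * Tform j q a b c d x y))
  = 2 * (q * q * r00 + q * (- (sgn e0 - j * sgn e1)) * d
         + (- (sgn e0 + j * sgn e1)) * q * a
         + (- (sgn e0 + j * sgn e1)) * (- (sgn e0 - j * sgn e1)) * r11)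
    + 4 * r01 + 4 * r10 + 4 * (1 - (r00 + r01 + r10 + r11)).
Proof.
move=> hj hs hs0.
case: e0; case: e1; rewrite /fxyz /Tform !big_bool /sgn /=; field: hj hs => //.
Qed.


Lemma qf_pair2 n (A : 'M[C]_n) p q a c :
  qf A (a *: delta_mx p (0:'I_1) + c *: delta_mx q (0:'I_1)) =
  a^* * a * A p p + a^* * c * A p q + c^* * a * A q p + c^* * c * A q q.
Proof.
rewrite /qf adjmxD !adjmxZ !mulmxDl !mulmxDr -!scalemxAl -!scalemxAr !qf_delta2m !mxE /=.
rewrite !mulr1n; ring.
Qed.

Lemma sgn_conj (e : bool) : (sgn e : C)^* = sgn e.
Proof. by case: e; rewrite /sgn ?conjCN1 ?conjC1. Qed.

Lemma coreAB (R : 'M[C]_(2 * 2)) (e0 e1 : bool) : is_state R ->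
  sgn e0 * Yz R false + sgn e1 * Yz R true <= 4.
Proof.
move=> [hR htr].
have d1 := diag_ge0 (idx i0 i1) hR; have d2 := diag_ge0 (idx i1 i0) hR.
pose c : C := - (sgn e0 - 'i * sgn e1).
have cc : c^* = - (sgn e0 + 'i * sgn e1).
  by rewrite /c rmorphN rmorphB rmorphM /= conjCi !sgn_conj mulNr opprK.
have hq := hR.2 (s *: delta_mx (idx i0 i0) 0 + c *: delta_mx (idx i1 i1) 0).
rewrite -/(qf _ _) qf_pair2 cc sconj in hq.
rewrite trace4 in htr.
have hY z : Yz R z = \sum_x \sum_y sgn (fxyz x y z) *
   Tform 'i s (R (idx i1 i1) (idx i0 i0)) (R (idx i1 i0) (idx i0 i1))
     (R (idx i0 i1) (idx i1 i0)) (R (idx i0 i0) (idx i1 i1)) x y.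
  by rewrite Yz_obs; apply: eq_bigr => x _; apply: eq_bigr => y _; rewrite tr_obs.
rewrite !hY -subr_ge0 (@alg_core _ _ _ _ _ _ (R (idx i0 i0) (idx i0 i0))
   (R (idx i0 i1) (idx i0 i1)) (R (idx i1 i0) (idx i1 i0)) (R (idx i1 i1) (idx i1 i1))
   e0 e1 (ii C) (s2 C) (s_neq0 C)) htr subrr mulr0 addr0.
by rewrite -/c; apply: addr_ge0; [apply: addr_ge0|]; apply: mulr_ge0 => //.
Qed.

End Core2.

Section Bound.
Variable C : numClosedFieldType.
Local Notation s := (sqrtC (2 : C)).

Definition Sval (P : corr C) :=
  \sum_x \sum_y \sum_z \sum_a \sum_b \sum_c
     sgn (a (+) b (+) c (+) fxyz x y z) * P a b c x y z.

Definition Yf (T : bool -> bool -> bool -> bool -> C) z :=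
  \sum_x \sum_y \sum_a \sum_b sgn (a (+) b (+) fxyz x y z) * T a b x y.

Lemma comb (T : bool -> bool -> bool -> bool -> C) (g : bool -> bool -> C) (w : C) :
  g true false = 1 - g false false -> g true true = 1 - g false true ->
  \sum_x \sum_y \sum_z \sum_a \sum_b \sum_c
     sgn (a (+) b (+) c (+) fxyz x y z) * (w * T a b x y * g c z)
  = w * \sum_c0 \sum_c1 (g c0 false * g c1 true) * (sgn c0 * Yf T false + sgn c1 * Yf T true).
Proof.
move=> h0 h1; rewrite /Yf /fxyz !big_bool /= h0 h1 /sgn /=; ring.
Qed.

Lemma Sbound n (w : 'I_n -> C) (rho : 'I_n -> 'M[C]_(2 * 2))
  (g : 'I_n -> bool -> bool -> C) (P : corr C) :
  (forall l, 0 <= w l) -> \sum_l w l = 1 -> (forall l, is_state (rho l)) ->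
  (forall l c z, 0 <= g l c z) -> (forall l z, g l false z + g l true z = 1) ->
  (forall a b c x y z, P a b c x y z =
     \sum_l w l * \tr (kron (MA a x) (MB b y) *m rho l) * g l c z) ->
  Sval P <= 4.
Proof.
move=> hw hw1 hst hg hg1 hP.
rewrite /Sval.
under eq_bigr => x _ do under eq_bigr => y _ do under eq_bigr => z _ do
  under eq_bigr => a _ do under eq_bigr => b _ do under eq_bigr => c _ do
  rewrite hP mulr_sumr.
under eq_bigr => x _ do under eq_bigr => y _ do under eq_bigr => z _ do
  under eq_bigr => a _ do under eq_bigr => b _ do rewrite exchange_big.
under eq_bigr => x _ do under eq_bigr => y _ do under eq_bigr => z _ do
  under eq_bigr => a _ do rewrite exchange_big.
under eq_bigr => x _ do under eq_bigr => y _ do under eq_bigr => z _ do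
  rewrite exchange_big.
under eq_bigr => x _ do under eq_bigr => y _ do rewrite exchange_big.
under eq_bigr => x _ do rewrite exchange_big.
rewrite exchange_big /=.
apply: (@le_trans _ _ (\sum_l w l * 4)); last by rewrite -mulr_suml hw1 mul1r.
apply: ler_sum => l _.
have h0 : g l true false = 1 - g l false false by rewrite -(hg1 l false) addrC addKr.
have h1 : g l true true = 1 - g l false true by rewrite -(hg1 l true) addrC addKr.
rewrite (@comb (fun a b x y => \tr (kron (MA a x) (MB b y) *m rho l)) (g l) (w l) h0 h1).
apply: ler_wpM2l => //.
apply: (@le_trans _ _ (\sum_c0 \sum_c1 (g l c0 false * g l c1 true) * 4)).
  apply: ler_sum => c0 _; apply: ler_sum => c1 _.
  apply: ler_wpM2l; first by apply: mulr_ge0.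
  exact: (coreAB c0 c1 (hst l)).
rewrite !big_bool /= h0 h1 [X in X <= _](_ : _ = 4) //; ring.
Qed.

Lemma Sval_PSvF (V : C) : Sval (PSvF V) = 4 * s * V.
Proof.
have h : (16 : C) != 0 by rewrite pnatr_eq0.
rewrite /Sval /PSvF /fxyz !big_bool /sgn /=; field => //.
Qed.

End Bound.

Section Model.
Variable C : numClosedFieldType.
Local Notation s := (sqrtC (2 : C)).

Lemma mx1_sum n : (1%:M : 'M[C]_n) = \sum_l delta_mx l l.
Proof.
apply/matrixP => i j; rewrite summxE (bigD1 i) //= big1 ?addr0.
  by rewrite !mxE eqxx /= eq_sym.
by move=> k /negbTE hk; rewrite mxE eq_sym hk.
Qed.

Definition ev n (p : 'I_n) : 'cV[C]_n := delta_mx p 0.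

Lemma ev_rank1 n (p : 'I_n) : ev p *m adjmx (ev p) = delta_mx p p.
Proof. by rewrite /ev adjmx_delta mul_delta_mx. Qed.

Lemma state_ev n (p : 'I_n) : is_state (ev p *m adjmx (ev p)).
Proof.
split; first exact: psd_rank1.
by rewrite -[X in \tr X]mul1mx tr_rank1 /qf /ev qf_delta2 mxE eqxx.
Qed.

Lemma tr_ev n (M : 'M[C]_n) p : \tr (M *m (ev p *m adjmx (ev p))) = M p p.
Proof. by rewrite tr_rank1 /qf /ev qf_delta2. Qed.

Lemma tr_ev_pair n (M : 'M[C]_n) p q a c :
  \tr (M *m ((a *: ev p + c *: ev q) *m adjmx (a *: ev p + c *: ev q))) =
  a^* * a * M p p + a^* * c * M p q + c^* * a * M q p + c^* * c * M q q.
Proof. by rewrite tr_rank1 qf_pair2. Qed.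

Definition rhoT (t u : C) : 'M[C]_(2 * 2) :=
  2^-1 *: (t *: ((1 *: ev (idx i0 i0) + u *: ev (idx i1 i1)) *m
                 adjmx (1 *: ev (idx i0 i0) + u *: ev (idx i1 i1)))
          + (1 - t) *: (ev (idx i0 i0) *m adjmx (ev (idx i0 i0))
                        + ev (idx i1 i1) *m adjmx (ev (idx i1 i1)))).

Lemma tr_rhoT t u (A B : 'M[C]_2) :
  \tr (kron A B *m rhoT t u) =
  2^-1 * (t * (A i0 i0 * B i0 i0 + u * (A i0 i1 * B i0 i1) + u^* * (A i1 i0 * B i1 i0)
               + u^* * u * (A i1 i1 * B i1 i1))
          + (1 - t) * (A i0 i0 * B i0 i0 + A i1 i1 * B i1 i1)).
Proof.
rewrite /rhoT -!scalemxAr !mxtraceZ !mulmxDr !mxtraceD -!scalemxAr !mxtraceZ.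
rewrite mulmxDr mxtraceD tr_ev_pair !tr_ev !kronE conjC1; ring.
Qed.

Lemma state_rhoT t u : 0 <= t -> t <= 1 -> u * u^* = 1 -> is_state (rhoT t u).
Proof.
move=> t0 t1 hu; split.
  apply: psd_scale; first by rewrite invr_ge0 ler0n.
  apply: psd_add; apply: psd_scale; rewrite ?subr_ge0 //; first exact: psd_rank1.
  by apply: psd_add; apply: psd_rank1.
rewrite -[X in \tr X]mul1mx -(kron11 C 2 2) tr_rhoT !mxE /=.
have h2 : (2 : C) != 0 by rewrite pnatr_eq0.
field: hu => //.
Qed.


Definition cbit (z : bool) (l : 'I_4) : bool := if z then odd l else (1 < l)%N.

Definition Nc (c z : bool) : 'M[C]_4 :=
  \sum_l ((cbit z l == c)%:R : C) *: (ev l *m adjmx (ev l)).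

Lemma Nc_entry c z l : Nc c z l l = (cbit z l == c)%:R.
Proof.
rewrite /Nc summxE (bigD1 l) //= big1 ?addr0.
  by rewrite ev_rank1 !mxE !eqxx mulr1.
by move=> k /negbTE hk; rewrite ev_rank1 !mxE [l == k]eq_sym hk mulr0.
Qed.

Lemma Nc_psd c z : psd (Nc c z).
Proof. by apply: psd_sum => l _; apply: psd_scale; [exact: ler0n | exact: psd_rank1]. Qed.

Lemma Nc_sum z : Nc false z + Nc true z = 1%:M.
Proof.
rewrite /Nc -big_split mx1_sum /=; apply: eq_bigr => l _.
by rewrite -scalerDl ev_rank1; case: (cbit z l) => /=; rewrite ?add0r ?addr0 scale1r.
Qed.

Definition ul (l : 'I_4) : C :=
  sgn (1 < l)%N * (if (1 < l)%N (+) odd l then 1 + 'i else 1 - 'i) * s^-1.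
Definition ulc (l : 'I_4) : C :=
  sgn (1 < l)%N * (if (1 < l)%N (+) odd l then 1 - 'i else 1 + 'i) * s^-1.

Lemma conj1pi : (1 + 'i)^* = 1 - 'i :> C.
Proof. by rewrite raddfD /= conjC1 conjCi. Qed.
Lemma conj1mi : (1 - 'i)^* = 1 + 'i :> C.
Proof. by rewrite raddfB /= conjC1 conjCi opprK. Qed.

Lemma conj_ul l : (ul l)^* = ulc l.
Proof.
rewrite /ul /ulc !rmorphM /= sgn_conj fmorphV /= sconj.
by case: ifP => _; rewrite ?conj1pi ?conj1mi.
Qed.

Lemma ul_norm l : ul l * (ul l)^* = 1.
Proof.
rewrite conj_ul /ul /ulc.
have hi := ii C; have hs := s2 C; have hs0 := s_neq0 C.
by case: (1 < l)%N; case: (odd l); rewrite /sgn /=; field: hi hs => //.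
Qed.


Lemma sgn_xor a b : sgn (a (+) b) = sgn a * sgn b :> C.
Proof. by case: a; case: b; rewrite /sgn /= ?mulN1r ?opprK ?mul1r. Qed.

Lemma sgnT : sgn true = -1 :> C. Proof. by []. Qed.
Lemma sgnF : sgn false = 1 :> C. Proof. by []. Qed.

Lemma model_eq (V : C) a b c x y z :
  PSvF V a b c x y z =
  \sum_(l < 4) 4^-1 * (\tr (kron (MA a x) (MB b y) *m rhoT (s * V) (ul l)) *
                        \tr (Nc c z *m (ev l *m adjmx (ev l)))).
Proof.
have hi := ii C; have hs := s2 C; have hs0 := s_neq0 C.
have h2 : (2 : C) != 0 by rewrite pnatr_eq0.
under eq_bigr do rewrite tr_rhoT tr_ev Nc_entry conj_ul.
rewrite !big_ord_recl big_ord0 /PSvF !sgn_xor.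
case: c; case: x; case: y; case: z;
  rewrite /MA /MB /proj_of /obsA /obsB /sigma_x /sigma_y /ul /ulc /cbit !mxE /= ?sgnT ?sgnF;
  field: hi hs => //.
Qed.

End Model.

Lemma sep_model (C : numClosedFieldType) (V : C) :
  0 < V -> V <= (sqrtC 2)^-1 -> AB_C_separable_model (PSvF V).
Proof.
move=> V0 Vs.
have sp := s_gt0 C.
exists 4%N, 4%N, (fun _ => 4^-1), (fun l => @rhoT C (sqrtC 2 * V) (@ul C l)),
  (fun l => @ev C 4 l *m adjmx (@ev C 4 l)), (@Nc C).
split; first by move=> l; rewrite invr_ge0 ler0n.
split.
  have h4 : (4 : C) != 0 by rewrite pnatr_eq0.
  by rewrite sumr_const card_ord -mulr_natr; field.
split.
  move=> l; split; last exact: state_ev.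
  apply: state_rhoT; last exact: ul_norm.
    by apply: mulr_ge0; [exact: ltW | exact: ltW].
  by move: Vs; rewrite -(ler_pM2l sp) mulfV // s_neq0.
split; first by move=> c z; exact: Nc_psd.
split; first by move=> z; exact: Nc_sum.
move=> a b c x y z; rewrite model_eq mulmx_sumr tr_sum; apply: eq_bigr => l _.
by rewrite -[in RHS]scalemxAr [in RHS]mxtraceZ kron_mul tr_kron.
Qed.

Unset Implicit Arguments.

Theorem proposition2 (C : numClosedFieldType) (V : C) :
  0 < V -> V <= 1 ->
  (tripartite_steering (PSvF V) <-> (sqrtC 2)^-1 < V).
Proof.
move=> V0 V1; have sp := s_gt0 C.
have key : (sqrtC 2)^-1 < V -> 4 < Sval (PSvF V).
  move=> h; rewrite Sval_PSvF.
  have h1 : 1 < sqrtC 2 * V.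
    have h' : sqrtC 2 * (sqrtC 2)^-1 < sqrtC 2 * V by rewrite (ltr_pM2l sp).
    by rewrite mulfV ?s_neq0 in h'.
  by rewrite -mulrA -[X in X < _]mulr1 ltr_pM2l // ltr0n.
split.
  move=> [_ nS]; rewrite real_ltNge; first last.
  - exact: gtr0_real.
  - by apply: gtr0_real; rewrite invr_gt0.
  by apply/negP => hle; apply: nS; exact: sep_model.
move=> h; split.
  move=> [n [q [rA [rB [Pc [hq [hq1 [hst [hPc [hPc1 hP]]]]]]]]]].
  have hS : Sval (PSvF V) <= 4.
    apply: (@Sbound C n q (fun l => kron (rA l) (rB l)) Pc) => //.
      move=> l; have [[pA tA] [pB tB]] := hst l; split; first exact: psd_kron.
      by rewrite tr_kron tA tB mulr1.
    move=> a b c x y z; rewrite hP; apply: eq_bigr => l _.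
    by rewrite kron_mul tr_kron mulrA.
  by have := lt_le_trans (key h) hS; rewrite ltxx.
move=> [d [n [r [rAB [rC [N [hr [hr1 [hst [hN [hN1 hP]]]]]]]]]]].
have hS : Sval (PSvF V) <= 4.
  apply: (@Sbound C n r rAB (fun l c z => \tr (N c z *m rC l))) => //.
  - by move=> l; case: (hst l).
  - by move=> l c z; apply: tr_psd_ge0 => //; case: (hst l) => _ [].
  - move=> l z; rewrite -mxtraceD -mulmxDl hN1 mul1mx.
    by case: (hst l) => _ [].
  move=> a b c x y z; rewrite hP mulmx_sumr tr_sum; apply: eq_bigr => l _.
  by rewrite -scalemxAr mxtraceZ kron_mul tr_kron mulrA.
by have := lt_le_trans (key h) hS; rewrite ltxx.
Qed.
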